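(* For every integer $n\ge 4$ there exist a boolean classifier $\kappa:\{0,1\}^n\to\{0,1\}$ and a point $\mathbf v\in\{0,1\}^n$ such that, for the sample $(\mathbf v,\kappa(\mathbf v))$, there is an irrelevant feature $i\in\mathcal F$ with $|\mathrm{Sv}(j)|<|\mathrm{Sv}(i)|$ for every $j\in\mathcal F\setminus\{i\}$ (issue I5; in particular $|\mathrm{Sv}(i)|=\max_{j\in\mathcal F}|\mathrm{Sv}(j)|$).
   Context: Let $\mathcal F=\{1,\dots,n\}$. A boolean classifier is a non-constant function $\kappa:\{0,1\}^n\to\{0,1\}$; a sample is a pair $(\mathbf v,c)$ with $\mathbf v\in\{0,1\}^n$ and $c=\kappa(\mathbf v)$. For $\mathcal S\subseteq\mathcal F$ let $\Upsilon(\mathcal S;\mathbf v)=\{\mathbf x\in\{0,1\}^n : x_j=v_j \text{ for all } j\in\mathcal S\}$ and, for any function $g$ on $\{0,1\}^n$, $\mathbf E[g\mid \mathbf x_{\mathcal S}=\mathbf v_{\mathcal S}]=|\Upsilon(\mathcal S;\mathbf v)|^{-1}\sum_{\mathbf x\in\Upsilon(\mathcal S;\mathbf v)}g(\mathbf x)$ (uniform distribution, independent features). The characteristic function is $\upsilon(\mathcal S)=\mathbf E[\kappa\mid\mathbf x_{\mathcal S}=\mathbf v_{\mathcal S}]$, and the SHAP score of feature $i$ is $\mathrm{Sv}(i)=\sum_{\mathcal S\subseteq\mathcal F\setminus\{i\}}\frac{|\mathcal S|!\,(n-|\mathcal S|-1)!}{n!}\big(\upsilon(\mathcal S\cup\{i\})-\upsilon(\mathcal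 S)\big)$. The similarity predicate is $\sigma(\mathbf x)=1$ if $\kappa(\mathbf x)=\kappa(\mathbf v)$ and $0$ otherwise. A set $\mathcal S\subseteq\mathcal F$ is a weak abductive explanation (WAXp) if $\mathbf E[\sigma\mid\mathbf x_{\mathcal S}=\mathbf v_{\mathcal S}]=1$ (i.e. $\kappa(\mathbf x)=\kappa(\mathbf v)$ for all $\mathbf x\in\Upsilon(\mathcal S;\mathbf v)$); an abductive explanation (AXp) is a WAXp $\mathcal S$ such that $\mathcal S\setminus\{t\}$ is not a WAXp for every $t\in\mathcal S$. A feature is relevant if it belongs to at least one AXp, and irrelevant otherwise. *)

(* Defs.v *)
From mathcomp Require Import all_boot all_order all_algebra.
Set Implicit Arguments. Unset Strict Implicit. Unset Printing Implicit Defensive.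
Import Order.TTheory GRing.Theory Num.Theory.
Local Open Scope ring_scope.

(* A point of {0,1}^n; features are 'I_n (feature i+1 of the paper is i). *)
Definition point (n : nat) := {ffun 'I_n -> bool}.

Definition nonconstant (n : nat) (kappa : point n -> bool) : Prop :=
  exists x y : point n, kappa x != kappa y.

Definition Upsilon (n : nat) (S : {set 'I_n}) (v : point n) : {set point n} :=
  [set x : point n | [forall j in S, x j == v j]].

Definition cond_expect (n : nat) (g : point n -> rat) (S : {set 'I_n}) (v : point n) : rat :=
  (\sum_(x in Upsilon S v) g x) / (#|Upsilon S v|)%:R.

Definition charfun (n : nat) (kappa : point n -> bool) (v : point n) (S : {set 'I_n}) : rat :=
  cond_expect (fun x => (kappa x)%:R) S v.

Definition Sv (n : nat) (kappa : point n -> bool) (v : point n) (i : 'I_n) : rat :=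
  \sum_(S : {set 'I_n} | i \notin S)
     ((#|S|`! * (n - #|S| - 1)`!)%:R / (n`!)%:R) *
     (charfun kappa v (i |: S) - charfun kappa v S).

Definition sigma (n : nat) (kappa : point n -> bool) (v : point n) (x : point n) : rat :=
  (kappa x == kappa v)%:R.

Definition WAXp (n : nat) (kappa : point n -> bool) (v : point n) (S : {set 'I_n}) : Prop :=
  cond_expect (sigma kappa v) S v = 1.

Definition AXp (n : nat) (kappa : point n -> bool) (v : point n) (S : {set 'I_n}) : Prop :=
  WAXp kappa v S /\ forall t, t \in S -> ~ WAXp kappa v (S :\ t).

Definition relevant (n : nat) (kappa : point n -> bool) (v : point n) (i : 'I_n) : Prop :=
  exists S : {set 'I_n}, AXp kappa v S /\ i \in S.

Definition irrelevant (n : nat) (kappa : point n -> bool) (v : point n) (i : 'I_n) : Prop :=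
  ~ relevant kappa v i.

(* Main.v *)
Require Import Defs.
From mathcomp Require Import all_boot all_order all_algebra.
From mathcomp Require Import ring lra zify.
Import Order.TTheory GRing.Theory Num.Theory.
Local Open Scope ring_scope.


Definition one n : point n := [ffun => true].

Lemma card_Ups n (S : {set 'I_n}) : #|Upsilon S (one n)| = (2 ^ #|~: S|)%N.
Proof.
have := card_pffun_on true (~: S) (predT : pred bool).
rewrite card_bool => <-.
apply: eq_card => x; rewrite inE.
apply/forallP/familyP => H j.
  have := H j; rewrite !inE ffunE /=.
  by case: (j \in S) => //= /eqP ->.
have := H j; rewrite !inE ffunE /=.
by case: (j \in S) => //= /eqP ->.
Qed.

Lemma sum_ind (T:finType) (A : {pred T}) (b : pred T) :
  \sum_(x in A) (b x)%:R = (#|[pred x in A | b x]|)%:R :> rat.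
Proof.
rewrite -sum1_card natr_sum big_mkcond [RHS]big_mkcond; apply: eq_bigr => x _.
by rewrite !inE; case: (x \in A); case: (b x).
Qed.

Definition kap {n} (i0 : 'I_n) (x : point n) := ~~ x i0 || [forall k, x k].

Lemma ch_val n (i0 : 'I_n) S : charfun (kap i0) (one n) S =
  if i0 \in S then ((2%:R : rat) ^+ #|~:S|)^-1 else 2^-1 + ((2%:R : rat) ^+ #|~:S|)^-1.
Proof.
rewrite /charfun /cond_expect card_Ups.
set U := Upsilon S (one n).
have oneU : one n \in U by rewrite inE; apply/forallP => j; rewrite ffunE eqxx implybT.
rewrite (eq_bigr (fun x : point n => (~~ x i0)%:R + ([forall k, x k])%:R)); last first.
  move=> x _; rewrite /kap; case: (boolP [forall k, x k]) => [/forallP ->|] /=.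
    by rewrite add0r.
  by rewrite orbF addr0.
rewrite big_split /= !sum_ind.
have -> : #|[pred x in U | [forall k, x k]]| = 1%N.
  rewrite -(card1 (one n)); apply: eq_card => x; rewrite !inE.
  apply/andP/eqP => [[_ /forallP H]|->]; last by split=> //; apply/forallP => k; rewrite ffunE //=; rewrite implybT.
  by apply/(ffunP x (one n)) => k; rewrite ffunE H.
case: ifP => i0S.
  have -> : #|[pred x in U | ~~ x i0]| = 0%N.
    apply: eq_card0 => x; rewrite !inE; apply/negbTE; rewrite negb_and negbK.
    rewrite -implybE; apply/implyP => /forallP /(_ i0); rewrite i0S /= ffunE => /eqP ->.
    by [].
  by rewrite add0r natrX mul1r.
have := cardID ([pred x : point n | x i0]) U.
have -> : #|[predI U & [pred x : point n | x i0]]| = #|Upsilon (i0 |: S) (one n)|.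
  apply: eq_card => x; rewrite !inE.
  apply/andP/forallP => [[/forallP H xi] j|H].
    rewrite !inE; apply/implyP => /orP [/eqP ->|jS]; first by rewrite ffunE xi.
    by have := H j; rewrite jS.
  split; last by have := H i0; rewrite !inE eqxx ffunE /= => /eqP.
  apply/forallP => j; apply/implyP => jS; have := H j; rewrite !inE jS orbT.
  by [].
rewrite card_Ups.
have m1 : #|~: S| = (#|~: (i0 |: S)|).+1.
  by rewrite (cardsD1 i0 (~: S)) in_setC i0S /= setCU setDE setIC.
set p := #|~: (i0 |: S)|.
rewrite m1 card_Ups m1 expnS => H.
have -> : #|[pred x in U | ~~ x i0]| = (2 ^ p)%N.
  rewrite -[#|[pred x | _]|](@addnK (2 ^ p)%N) addnC.
  suff <- : #|[predD U & [pred x : point n | x i0]]| = #|[pred x in U | ~~ x i0]|.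
    by rewrite H mul2n -addnn addnK.
  by apply: eq_card => x; rewrite !inE andbC.
rewrite natrX exprS.
have hp : (2%:R : rat) ^+ p != 0 by rewrite expf_neq0 // pnatr_eq0.
rewrite natrM natrX; field; by rewrite hp.
Qed.

Lemma sum_ind2 (T:finType) (P : pred T) (b : pred T) :
  \sum_(x | P x) (b x)%:R = (#|[pred x | P x && b x]|)%:R :> rat.
Proof.
rewrite -sum1_card natr_sum big_mkcond [RHS]big_mkcond; apply: eq_bigr => x _.
by rewrite !inE; case: (P x); case: (b x).
Qed.

Lemma shap_sum n (i : 'I_n) (f : nat -> rat) :
 \sum_(S : {set 'I_n} | i \notin S)
    ((#|S|`! * (n - #|S| - 1)`!)%:R / (n`!)%:R) * f #|S|
  = (n%:R)^-1 * \sum_(k < n) f k.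
Proof.
set F := fun k : nat => ((k`! * (n - k - 1)`!)%:R / (n`!)%:R) * f k.
have cardS (S : {set 'I_n}) : i \notin S -> (#|S| < n)%N.
  move=> iS; have := subset_leq_card (subsetT (i |: S)).
  by rewrite cardsT card_ord cardsU1 iS.
rewrite (eq_bigr (fun S : {set 'I_n} => \sum_(k < n) (#|S| == k)%:R * F k)); last first.
  move=> S iS; rewrite (bigD1 (Ordinal (cardS S iS))) //= eqxx mul1r big1 ?addr0 //.
  move=> k kne; suff -> : (#|S| == k) = false by rewrite mul0r.
  by apply/negbTE; apply: contra kne => /eqP e; apply/eqP/val_inj => /=.
rewrite exchange_big big_distrr /=; apply: eq_bigr => k _.
rewrite -big_distrl /= sum_ind2.
have -> : #|[pred S : {set 'I_n} | (i \notin S) && (#|S| == k)]| = 'C(n.-1, k).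
  rewrite -[X in 'C(X.-1, _)](card_ord n) -(cardsC1 i) -cards_draws; apply: eq_card => S.
  by rewrite !inE subsetC sub1set in_setC.
rewrite /F; case: n i k {F} cardS => [[]//|n' _ k _] /=.
have -> : (n'.+1 - k - 1 = n' - k)%N by lia.
have kn : (k <= n')%N by rewrite -ltnS.
have H := bin_fact kn.
have h1 : (n'`! %:R : rat) != 0 by rewrite pnatr_eq0 -lt0n fact_gt0.
have h2 : (n'.+1%:R : rat) != 0 by rewrite pnatr_eq0.
rewrite factS natrM -H !natrM.
rewrite -H !natrM !mulf_eq0 !negb_or in h1.
case/and3P: h1 => h1 h3 h4.
field.
rewrite h1 h3 h4 !andbT; apply/eqP => E; have := ler0n rat n'; lra.
Qed.

Lemma cardC_n n (S : {set 'I_n}) : #|~: S| = (n - #|S|)%N.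
Proof. have := cardsC S; rewrite card_ord => H; lia. Qed.

Lemma cardCU1 n (S : {set 'I_n}) j : j \notin S -> #|~: S| = (#|~: (j |: S)|).+1.
Proof.
by move=> jS; rewrite (cardsD1 j (~: S)) in_setC jS /= setCU setDE setIC.
Qed.

Definition g n (k : nat) : rat := ((2%:R : rat) ^+ (n - k))^-1.

Lemma dj n (i0 j : 'I_n) (S : {set 'I_n}) : j != i0 -> j \notin S ->
  charfun (kap i0) (one n) (j |: S) - charfun (kap i0) (one n) S = g n #|S|.
Proof.
move=> ji jS; rewrite /g -cardC_n !ch_val (cardCU1 _ _ _ jS) in_setU1 eq_sym (negbTE ji) /=.
have h : (2%:R : rat) ^+ #|~: (j |: S)| != 0 by rewrite expf_neq0 // pnatr_eq0.
case: (i0 \in S); rewrite exprS; field; by rewrite h.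
Qed.

Lemma di n (i0 : 'I_n) (S : {set 'I_n}) : i0 \notin S ->
  charfun (kap i0) (one n) (i0 |: S) - charfun (kap i0) (one n) S = g n #|S| - 2^-1.
Proof.
move=> iS; rewrite /g -cardC_n !ch_val (cardCU1 _ _ _ iS) setU11 (negbTE iS) /=.
have h : (2%:R : rat) ^+ #|~: (i0 |: S)| != 0 by rewrite expf_neq0 // pnatr_eq0.
rewrite exprS; field; by rewrite h.
Qed.

Lemma gsum n : \sum_(k < n) g n k = 1 - ((2%:R : rat) ^+ n)^-1.
Proof.
elim: n => [|n IH]; first by rewrite big_ord0 expr0 invr1 subrr.
rewrite big_ord_recr /= {2}/g subSnn expr1.
rewrite (eq_bigr (fun k : 'I_n => (2%:R : rat)^-1 * g n k)); last first.
  move=> k _; rewrite /g subSn; last by rewrite ltnW.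
  by rewrite exprS invrM ?unitfE ?pnatr_eq0 ?expf_neq0 // mulrC.
rewrite -big_distrr /= IH exprS.
have h : (2%:R : rat) ^+ n != 0 by rewrite expf_neq0 // pnatr_eq0.
field; by rewrite h.
Qed.

Lemma Sv_j n (i0 j : 'I_n) : j != i0 ->
  Sv (kap i0) (one n) j = (n%:R)^-1 * (1 - ((2%:R : rat) ^+ n)^-1).
Proof.
move=> ji; rewrite /Sv -gsum -(shap_sum _ j (g n)); apply: eq_bigr => S jS.
by rewrite dj.
Qed.

Lemma Sv_i n (i0 : 'I_n) :
  Sv (kap i0) (one n) i0 = (n%:R)^-1 * (1 - ((2%:R : rat) ^+ n)^-1) - 2^-1.
Proof.
rewrite /Sv -gsum.
rewrite (eq_bigr (fun S : {set 'I_n} => ((#|S|`! * (n - #|S| - 1)`!)%:R / (n`!)%:R) * (g n #|S| - 2^-1))); last first.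
  by move=> S iS; rewrite di.
rewrite (shap_sum _ i0 (fun k => g n k - 2^-1)) big_split /= sumr_const card_ord.
have n0 : (n%:R : rat) != 0 by rewrite pnatr_eq0 -lt0n; case: n i0 => [[]|].
rewrite -mulr_natr mulrDr; congr (_ + _).
by field.
Qed.

Lemma sig_ch n (i0 : 'I_n) T :
  cond_expect (sigma (kap i0) (one n)) T (one n) = charfun (kap i0) (one n) T.
Proof.
rewrite /charfun /cond_expect; congr (_ / _); apply: eq_bigr => x _.
rewrite /sigma.
have -> : kap i0 (one n) = true by rewrite /kap; apply/orP; right; apply/forallP => k; rewrite ffunE.
by case: (kap i0 x).
Qed.

Theorem proposition4 (n : nat) (hn : (4 <= n)%N) :
  exists (kappa : point n -> bool) (v : point n),
    nonconstant kappa /\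
    exists i : 'I_n, irrelevant kappa v i /\
      forall j : 'I_n, j != i -> `|Sv kappa v j| < `|Sv kappa v i|.
Proof.
have n0 : (0 < n)%N by lia.
pose i0 := Ordinal n0.
exists (kap i0), (one n); split.
  have n1 : (1 < n)%N by lia.
  exists [ffun k => k == i0], (one n).
  rewrite /kap !ffunE eqxx /=.
  have -> : [forall k, [ffun k => k == i0] k] = false.
    by apply/negbTE/negP => /forallP /(_ (Ordinal n1)); rewrite ffunE.
  have -> : [forall k, one n k] = true by apply/forallP => k; rewrite ffunE.
  by [].
exists i0; split.
  move=> [S [[W H] iS]]; apply: (H i0 iS).
  move: W; rewrite /WAXp !sig_ch !ch_val iS setD11 => W.
  have m0 : #|~: S| = 0%N.
    move/eqP: W; rewrite invr_eq1 -natrX pnatr_eq1 -[X in _ == X]/(2 ^ 0)%N eqn_exp2l //.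
    by move/eqP.
  have -> : #|~: (S :\ i0)| = 1%N.
    by rewrite setCD setUC cardsU1 in_setC iS m0.
  by rewrite expr1; field.
set A := (n%:R)^-1 * (1 - ((2%:R : rat) ^+ n)^-1).
move=> j ji; rewrite Sv_i Sv_j //.
have t0 : 0 < ((2%:R : rat) ^+ n)^-1 by rewrite invr_gt0 exprn_gt0.
have t1 : ((2%:R : rat) ^+ n)^-1 < 1.
  by rewrite invf_lt1 ?exprn_gt0 // exprn_egt1 //; lia.
have N0 : 0 < (n%:R : rat)^-1 by rewrite invr_gt0 ltr0n.
have N1 : (n%:R : rat)^-1 <= 4^-1.
  by rewrite lef_pV2 ?posrE ?ltr0n // (ler_nat rat 4 n); lia.
have P : 0 < (n%:R : rat)^-1 * ((2%:R : rat) ^+ n)^-1 by rewrite mulr_gt0.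
have A0 : 0 < A by rewrite /A mulr_gt0 // subr_gt0.
have A1 : A < 4^-1 by rewrite /A mulrBr mulr1; lra.
rewrite ger0_norm ?ltW // ltr0_norm; lra.
Qed.
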